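(* Let $w\in\mathbb{Q}^{V_+}_{\ge0}$, $b\in\mathbb{Z}^{V_+}_{\ge0}$, $\emptyset\ne S\subseteq V_+$ and $k'\in\mathbb{Z}_{>0}$, and assume $k_\xi(S)-k'\le b(S)$ for every $\xi\in[N]$. For each $\xi$, write $S=\{v_1,\dots,v_\ell\}$ with $w_{v_1}\le\dots\le w_{v_\ell}$, let $j\in[\ell]$ be the smallest index with $k_\xi(S)-k'\le\sum_{i\in[j]}b_{v_i}$, and set $\bar\alpha^\xi_S=\mathbb{I}(k_\xi(S)>k')\,w_{v_j}$ and $\bar\beta^\xi_v=\mathbb{I}(v\in\{v_1,\dots,v_{j-1}\})(w_v-w_{v_j})$ for $v\in V_+$. Define $\hat\alpha^\xi_{S'}=\mathbb{I}(S'=S)\,p_\xi\bar\alpha^\xi_S$ for all $\emptyset\ne S'\subseteq V_+$, $\xi\in[N]$, and $\hat\beta^\xi_v=p_\xi\bar\beta^\xi_v$. Then $(\hat\alpha,\hat\beta)\in\mathcal{A}$, and for every $\bar x\in\{x\in\mathcal{X}:x(E(S))\le|S|-k'\}$ every $\theta\in\operatorname{proj}_\theta(\Gamma(\bar x,\hat\alpha,\hat\beta))$ satisfies $$\theta(S)\ge\mathcal{L}^*(S,k')\cdot\big(1+\bar x(E(S))-|S|+k'\big).$$ In particular, if $x(E(S))\le|S|-k'$ is valid for $\mathcal{P}$, then the inequality $\theta(S)\ge\mathcal{L}^*(S,k')(1+x(E(S))-|S|+k')$ (with $x$ free) is valid for $\mathcal{P}$.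
   Context: $G=(V,E)$ complete undirected graph, $V=\{0\}\cup V_+$ ($V_+$ customers), edge costs $c\in\mathbb{Q}^E_{\ge0}$; capacity $C>0$; scenarios $\xi\in[N]$ with demands $d^\xi\in\mathbb{Q}^{V_+}_{\ge0}$ ($d^\xi(v)\le C$) and probabilities $p_\xi\ge0$, $\sum_\xi p_\xi=1$. $f(S)=\sum_{i\in S}f(i)$; $k_\xi(S)=\lceil d^\xi(S)/C\rceil$; $\bar d=\sum_\xi p_\xi d^\xi$; $\mathbb{I}$ is the indicator; $E(S)$ edges with both ends in $S$, $\delta(S)$ edges with exactly one end in $S$. $\mathcal{X}$ is one of $\mathcal{X}_{\mathrm{sub}}=\{x\in[0,2]^E: x(\delta(v))=2\ \forall v\in V_+,\ x(E(S))\le|S|-1\ \forall\emptyset\ne S\subseteq V_+\}$ or $\mathcal{X}_{\mathrm{cvrp}}=\mathcal{X}_{\mathrm{sub}}\cap\{x:x(\delta(0))=2k,\ x(E(S))\le|S|-\lceil\bar d(S)/C\rceil\ \forall \emptyset\ne S\subseteq V_+\}$ ($k$ a given positive integer). Vectors $y\in\mathbb{R}^{[N]\times V_+}$ have entries $y^\xi_v$; $[\mathbf 0,b]^N=\{y:0\le y^\xi_v\le b_v\}$. Multipliers: $\alpha=(\alpha^\xi_S)_{\xi\in[N],\emptyset\ne S\subseteq V_+}\ge0$, $\beta=(\beta^\xi_v)\le0$. Define $\nu(\alpha,\beta)=\sum_\xi\sum_S\alpha^\xi_S(k_\xi(S)-|S|)+\sum_\xi\sum_{v}\beta^\xi_v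 b_v$. $\mathcal{A}$ is the set of $(\alpha,\beta)$ with $\alpha\ge0$, $\beta\le0$ and $\beta^\xi_v+\sum_{S\ni v}\alpha^\xi_S\le0$ for all $\xi$ and all $v$ with $w_v=0$. For $\bar x\in\mathcal{X}$, $\Gamma(\bar x,\alpha,\beta)$ is the set of $(\theta,y)\in\mathbb{R}^{V_+}_{\ge0}\times[\mathbf 0,b]^N$ with $\sum_\xi\sum_v(\beta^\xi_v+\sum_{S\ni v}\alpha^\xi_S)y^\xi_v\ge\sum_\xi\sum_S\alpha^\xi_S\bar x(E(S))+\nu(\alpha,\beta)$ and $\theta_v\ge\sum_\xi p_\xi w_v y^\xi_v$ for all $v\in V_+$; $\operatorname{proj}_\theta$ is its projection onto $\theta$. $\mathcal{P}=\{(x,\theta):x\in\mathcal{X},\ \theta\in\operatorname{proj}_\theta(\widehat{\mathrm{SRI}}(x))\}$, where $\widehat{\mathrm{SRI}}(x)$ is the set of $(\theta,y)\in\mathbb{R}^{V_+}_{\ge0}\times[\mathbf 0,b]^N$ with $y^\xi(S)\ge k_\xi(S)+x(E(S))-|S|$ for all $\emptyset\ne S\subseteq V_+$, $\xi\in[N]$, and $\theta_v\ge\sum_\xi p_\xi w_v y^\xi_v$ for all $v$. Finally $\mathcal{L}^*(S,k')=\sum_\xi p_\xi\mathcal{L}^*_\xi(S,k')$ where $\mathcal{L}^*_\xi(S,k')=\min\{\sum_{v\in V_+}w_vy_v: y(S)\ge k_\xi(S)-k',\ y_v\le b_v\ \forall v\in V_+,\ y\ge0\}$. *)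

(* Defs.v *)
From HB Require Import structures.
From mathcomp Require Import all_boot all_order all_algebra.
From mathcomp Require Import reals.
Set Implicit Arguments. Unset Strict Implicit. Unset Printing Implicit Defensive.
Import Order.TTheory GRing.Theory Num.Theory.
Local Open Scope ring_scope.

(* Vertices: V = option 'I_n, with None = depot 0 and Some i = customer i
   (V_+ = 'I_n).  Edges of the complete graph on V: 2-element vertex sets. *)
Definition Edge (n : nat) := {e : {set option 'I_n} | #|e| == 2%N}.

Definition xE (R : realType) n (x : Edge n -> R) (S : {set 'I_n}) : R :=
  \sum_(e : Edge n | val e \subset Some @: S) x e.

Definition xdelta (R : realType) n (x : Edge n -> R) (v : option 'I_n) : R :=
  \sum_(e : Edge n | v \in val e) x e.

Definition fS (R : numDomainType) n (f : 'I_n -> R) (S : {set 'I_n}) : R :=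
  \sum_(i in S) f i.

Definition kxi n N (C : rat) (d : 'I_N -> 'I_n -> rat) (xi : 'I_N)
  (S : {set 'I_n}) : int := Num.ceil (fS (d xi) S / C).

Definition dbar n N (p : 'I_N -> rat) (d : 'I_N -> 'I_n -> rat) (i : 'I_n) : rat :=
  \sum_(xi < N) p xi * d xi i.

Inductive Xkind := XSub | XCvrp of nat.

Definition inXsub (R : realType) n (x : Edge n -> R) : Prop :=
  [/\ forall e, 0 <= x e <= 2,
      forall v : 'I_n, xdelta x (Some v) = 2
    & forall S : {set 'I_n}, (0 < #|S|)%N -> xE x S <= #|S|%:R - 1].

Definition inX (R : realType) n N (C : rat) (p : 'I_N -> rat)
  (d : 'I_N -> 'I_n -> rat) (X : Xkind) (x : Edge n -> R) : Prop :=
  match X with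
  | XSub => inXsub x
  | XCvrp k =>
      [/\ inXsub x, xdelta x None = 2 * k%:R
        & forall S : {set 'I_n}, (0 < #|S|)%N ->
            xE x S <= #|S|%:R - (Num.ceil (fS (dbar p d) S / C))%:~R]
  end.

Definition inBox (R : realType) n N (b : 'I_n -> nat) (y : 'I_N -> 'I_n -> R) :=
  forall xi v, 0 <= y xi v <= (b v)%:R.

Definition nu (R : realType) n N (C : rat) (d : 'I_N -> 'I_n -> rat)
  (b : 'I_n -> nat) (alpha : 'I_N -> {set 'I_n} -> R) (beta : 'I_N -> 'I_n -> R) : R :=
  \sum_(xi < N) \sum_(S : {set 'I_n} | (0 < #|S|)%N)
      alpha xi S * ((kxi C d xi S)%:~R - #|S|%:R)
  + \sum_(xi < N) \sum_(v < n) beta xi v * (b v)%:R.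

Definition alphaAt (R : realType) n N (alpha : 'I_N -> {set 'I_n} -> R) xi (v : 'I_n) : R :=
  \sum_(S : {set 'I_n} | (0 < #|S|)%N && (v \in S)) alpha xi S.

Definition inA (R : realType) n N (w : 'I_n -> rat)
  (alpha : 'I_N -> {set 'I_n} -> R) (beta : 'I_N -> 'I_n -> R) : Prop :=
  [/\ forall xi (S : {set 'I_n}), (0 < #|S|)%N -> 0 <= alpha xi S,
      forall xi v, beta xi v <= 0
    & forall xi v, w v = 0 -> beta xi v + alphaAt alpha xi v <= 0].

Definition inGamma (R : realType) n N (C : rat) (p : 'I_N -> rat)
  (d : 'I_N -> 'I_n -> rat) (w : 'I_n -> rat) (b : 'I_n -> nat)
  (xbar : Edge n -> R) (alpha : 'I_N -> {set 'I_n} -> R) (beta : 'I_N -> 'I_n -> R)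
  (theta : 'I_n -> R) (y : 'I_N -> 'I_n -> R) : Prop :=
  [/\ forall v, 0 <= theta v,
      inBox b y,
      \sum_(xi < N) \sum_(v < n) (beta xi v + alphaAt alpha xi v) * y xi v >=
        \sum_(xi < N) \sum_(S : {set 'I_n} | (0 < #|S|)%N) alpha xi S * xE xbar S
        + nu C d b alpha beta
    & forall v, theta v >= \sum_(xi < N) ratr (p xi) * ratr (w v) * y xi v].

Definition inSRI (R : realType) n N (C : rat) (p : 'I_N -> rat)
  (d : 'I_N -> 'I_n -> rat) (w : 'I_n -> rat) (b : 'I_n -> nat)
  (x : Edge n -> R) (theta : 'I_n -> R) (y : 'I_N -> 'I_n -> R) : Prop :=
  [/\ forall v, 0 <= theta v,
      inBox b y,
      forall xi (S : {set 'I_n}), (0 < #|S|)%N ->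
        fS (y xi) S >= (kxi C d xi S)%:~R + xE x S - #|S|%:R
    & forall v, theta v >= \sum_(xi < N) ratr (p xi) * ratr (w v) * y xi v].

Definition inP (R : realType) n N (C : rat) (p : 'I_N -> rat)
  (d : 'I_N -> 'I_n -> rat) (w : 'I_n -> rat) (b : 'I_n -> nat) (X : Xkind)
  (x : Edge n -> R) (theta : 'I_n -> R) : Prop :=
  inX C p d X x /\ exists y, inSRI C p d w b x theta y.

(* L*_xi(S,k') = min { sum_v w_v y_v : y(S) >= k_xi(S) - k', 0 <= y <= b },
   taken as the infimum of the (nonempty, bounded below, attained) value set. *)
Definition Lstar_xi (R : realType) n N (C : rat) (d : 'I_N -> 'I_n -> rat)
  (w : 'I_n -> rat) (b : 'I_n -> nat) (S : {set 'I_n}) (k' : nat) (xi : 'I_N) : R :=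
  inf (fun r : R => exists y : 'I_n -> R,
        [/\ fS y S >= (kxi C d xi S - k'%:Z)%:~R,
            forall v, 0 <= y v <= (b v)%:R
          & r = \sum_(v < n) ratr (w v) * y v]).

Definition Lstar (R : realType) n N (C : rat) (p : 'I_N -> rat)
  (d : 'I_N -> 'I_n -> rat) (w : 'I_n -> rat) (b : 'I_n -> nat)
  (S : {set 'I_n}) (k' : nat) : R :=
  \sum_(xi < N) ratr (p xi) * Lstar_xi R C d w b S k' xi.

(* Greedy index (0-based): smallest j < size s with t <= b(v_0)+...+b(v_j);
   returns size s if none. *)
Definition jidx n (b : 'I_n -> nat) (s : seq 'I_n) (t : int) : nat :=
  find (fun m => t <= (\sum_(v <- take m.+1 s) b v)%:Z) (iota 0 (size s)).

(* bar alpha^xi_S for the ordering s = [v_1; ...; v_l] of S *)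
Definition alphabar n N (C : rat) (d : 'I_N -> 'I_n -> rat) (w : 'I_n -> rat)
  (b : 'I_n -> nat) (S : {set 'I_n}) (k' : nat) (xi : 'I_N) (s : seq 'I_n) : rat :=
  let t := kxi C d xi S - k'%:Z in
  (if k'%:Z < kxi C d xi S then 1 else 0) * nth 0 (map w s) (jidx b s t).

Definition betabar n N (C : rat) (d : 'I_N -> 'I_n -> rat) (w : 'I_n -> rat)
  (b : 'I_n -> nat) (S : {set 'I_n}) (k' : nat) (xi : 'I_N) (s : seq 'I_n)
  (v : 'I_n) : rat :=
  let t := kxi C d xi S - k'%:Z in
  let j := jidx b s t in
  (if v \in take j s then 1 else 0) * (w v - nth 0 (map w s) j).

(* Main.v *)
Require Import Defs.
From HB Require Import structures.
From mathcomp Require Import all_boot all_order all_algebra.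
From mathcomp Require Import reals classical_sets.
From mathcomp Require Import zify ring lra.
Import Order.TTheory GRing.Theory Num.Theory.
Local Open Scope ring_scope.

Lemma ratrB' (R : realType) (x y : rat) : (ratr (x - y) : R) = ratr x - ratr y.
Proof. by rewrite rmorphB. Qed.

Lemma ratrD' (R : realType) (x y : rat) : (ratr (x + y) : R) = ratr x + ratr y.
Proof. by rewrite rmorphD. Qed.

Lemma sum_ind (R : realType) (T : finType) (P : pred T) (a : T) (F : T -> R) :
  \sum_(x | P x) (if x == a then 1 else 0) * F x = if P a then F a else 0.
Proof.
rewrite big_mkcond (bigD1 a) //= eqxx mul1r big1 ?addr0; first by case: (P a).
by move=> x /negbTE ->; rewrite mul0r; case: (P x).
Qed.

Lemma sum_ind1 (R : realType) (T : finType) (a : T) (F : T -> R) :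
  \sum_x (if x == a then 1 else 0) * F x = F a.
Proof.
rewrite (bigD1 a) //= eqxx mul1r big1 ?addr0 //.
by move=> x /negbTE ->; rewrite mul0r.
Qed.

Lemma sum_inseq (R : realType) (T : finType) (r : seq T) (F : T -> R) :
  uniq r -> \sum_(v : T) (if v \in r then 1 else 0) * F v = \sum_(v <- r) F v.
Proof.
move=> ur; rewrite (big_uniq r) // [X in _ = X]big_mkcond; apply: eq_bigr => v _.
by case: ifP; rewrite ?mul1r ?mul0r.
Qed.

Lemma sum_inS (R : realType) (T : finType) (S : {set T}) (F : T -> R) :
  (forall v, v \notin S -> F v = 0) -> \sum_(v in S) F v = \sum_v F v.
Proof. by move=> h; rewrite big_mkcond; apply: eq_bigr => v _; case: ifPn => // /h ->. Qed.

Lemma jidx_facts n (b : 'I_n -> nat) (s : seq 'I_n) (t : int) :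
  (0 < size s)%N -> t <= (\sum_(v <- s) b v)%:Z ->
  let j := jidx b s t in
  [/\ (j < size s)%N, t <= (\sum_(v <- take j.+1 s) b v)%:Z &
      (0 < j)%N -> (\sum_(v <- take j s) b v)%:Z < t].
Proof.
move=> s0 ht j.
have hh : has (fun m => t <= (\sum_(v <- take m.+1 s) b v)%:Z) (iota 0 (size s)).
  apply/hasP; exists (size s).-1; first by rewrite mem_iota /= add0n ltn_predL.
  by rewrite prednK // take_size.
have jlt : (j < size s)%N by rewrite /j /jidx -{2}(size_iota 0 (size s)) -has_find.
split => //.
  by have := nth_find 0%N hh; rewrite -/(jidx b s t) -/j nth_iota.
move=> j0.
have := @before_find _ 0%N (fun m => t <= (\sum_(v <- take m.+1 s) b v)%:Z) (iota 0 (size s)) j.-1.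
rewrite -/(jidx b s t) -/j nth_iota ?add0n ?prednK //; last first.
  by rewrite (leq_trans _ (ltnW jlt)) // leq_pred.
by move=> /(_ (leqnn j)) /negbT; rewrite -ltNge.
Qed.
Lemma greedy (R : realType) n (w : 'I_n -> rat) (b : 'I_n -> nat) (S : {set 'I_n})
  (s : seq 'I_n) (t : int) :
  (forall v, 0 <= w v) -> perm_eq s (enum S) -> sorted (fun u v => w u <= w v) s ->
  (0 < #|S|)%N -> t <= (\sum_(v in S) b v)%:Z ->
  let j := jidx b s t in
  let a : rat := (if 0 < t then 1 else 0) * nth 0 (map w s) j in
  let bb := fun v : 'I_n => ((if v \in take j s then 1 else 0) * (w v - nth 0 (map w s) j) : rat) in
  0 <= a /\ (forall v, bb v <= 0) /\
  (forall v, v \in S -> 0 <= w v - a - bb v) /\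
  (forall v, v \notin S -> bb v = 0) /\
  (t <= 0 -> a = 0 /\ forall v, bb v = 0) /\
  (0 < t -> exists y : 'I_n -> R,
        [/\ t%:~R <= fS y S, forall v, 0 <= y v <= (b v)%:R,
            \sum_(v < n) ratr (w v) * y v =
              (ratr a : R) * t%:~R + \sum_(v < n) (ratr (bb v) : R) * (b v)%:R
          & (ratr a : R) <= (ratr a : R) * t%:~R + \sum_(v < n) (ratr (bb v) : R) * (b v)%:R]).
Proof.
move=> w0 ps ss S0 ht j a bb.
have us : uniq s by rewrite (perm_uniq ps) enum_uniq.
have ms : forall v, (v \in s) = (v \in S) by move=> v; rewrite (perm_mem ps) mem_enum.
have szs : size s = #|S| by rewrite (perm_size ps) cardE.
have [x0 x0S] : exists x, x \in S by apply/set0Pn; rewrite -card_gt0.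
have s0 : (0 < size s)%N by rewrite szs.
have hsum : t <= (\sum_(v <- s) b v)%:Z by rewrite (perm_big _ ps) big_enum.
have [jlt jup jlo] := @jidx_facts _ b s t s0 hsum; rewrite -/j in jlt jup jlo.
set u := nth x0 s j.
have wu : nth 0 (map w s) j = w u by rewrite (nth_map x0).
have uS : u \in S by rewrite -ms mem_nth.
have tk : forall v, v \in take j s -> v \in s /\ (index v s < j)%N.
  by move=> v vt; have vs := mem_take vt; split => //; rewrite -(in_take j vs).
have unt : u \notin take j s by rewrite (in_take j (mem_nth x0 jlt)) index_uniq // ltnn.
have tr : transitive (fun u v => w u <= w v) by move=> y x z h1 h2; exact: le_trans h1 h2.
have srt : forall i k, (i <= k)%N -> (k < size s)%N -> w (nth x0 s i) <= w (nth x0 s k).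
  move=> i k ik ks; apply: (sorted_leq_nth tr (fun x => lexx (w x)) x0 ss) => //.
  by rewrite inE (leq_ltn_trans ik ks).
have wle : forall v, v \in take j s -> w v <= w u.
  by move=> v /tk [vs iv]; rewrite -(nth_index x0 vs); apply: srt => //; exact: ltnW.
have wge : forall v, v \in S -> v \notin take j s -> w u <= w v.
  move=> v vS vt; have vs : v \in s by rewrite ms.
  rewrite -(nth_index x0 vs); apply: srt; last by rewrite index_mem.
  by rewrite leqNgt -(in_take j vs).
have j0 : t <= 0 -> j = 0%N.
  move=> t0; case: (posnP j) => // jp; have := jlo jp; lia.
have bbout : forall v, v \notin S -> bb v = 0.
  move=> v vS; rewrite /bb; case: ifP => h; last by rewrite mul0r.
  by have := mem_take h; rewrite ms (negbTE vS).
have tneg : t <= 0 -> a = 0 /\ forall v, bb v = 0.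
  move=> t0; split; first by rewrite /a ltNge t0 /= mul0r.
  by move=> v; rewrite /bb j0 // take0 in_nil mul0r.
split; first by rewrite /a; case: ifP => _; rewrite ?mul1r ?mul0r // wu.
split.
  move=> v; rewrite /bb wu; case: ifP => h; rewrite ?mul1r ?mul0r //.
  by rewrite subr_le0; exact: wle.
split.
  move=> v vS; case: (ltP 0 t) => tp; last first.
    by have [-> ->] := tneg tp; rewrite !subr0.
  rewrite /a tp mul1r wu /bb wu; case: ifP => h; rewrite ?mul1r ?mul0r.
    lra.
  by rewrite subr0 subr_ge0; apply: wge => //; rewrite h.
split => //; split => // tp.
set B := (\sum_(v <- take j s) b v)%N.
have Bt : B%:Z < t.
  case: (posnP j) => [jz|jp]; last exact: jlo jp.
  by rewrite /B jz take0 big_nil.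
have tB : t - B%:Z <= (b u)%:Z.
  by move: jup; rewrite (take_nth x0 jlt) -cats1 big_cat big_seq1 /= -/B -/u; lia.
set tau := t - B%:Z.
have tau1 : 1 <= tau by rewrite /tau; lia.
have W0 : forall v, 0 <= (ratr (w v) : R) by move=> v; rewrite ler0q.
pose y := fun v => (if v \in take j s then 1 else 0) * ((b v)%:R : R) + (if v == u then 1 else 0) * tau%:~R.
have yout : forall v, v \notin S -> y v = 0.
  move=> v vS; rewrite /y; case: ifP => h.
    by have := mem_take h; rewrite ms (negbTE vS).
  case: eqP => [e|_]; last by rewrite !mul0r addr0.
  by move: vS; rewrite e uS.
have BR : \sum_(v < n) (if v \in take j s then 1 else 0) * ((b v)%:R : R) = B%:R.
  by rewrite (sum_inseq _ _ _ _ (take_uniq _ us)) /B natr_sum.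
have tauR : (tau%:~R : R) = t%:~R - B%:R by rewrite /tau intrB -pmulrn.
have Wsum : \sum_(v < n) (ratr (bb v) : R) * (b v)%:R =
   \sum_(v < n) (if v \in take j s then 1 else 0) * (ratr (w v) * (b v)%:R) - ratr (w u) * B%:R.
  rewrite -BR mulr_sumr -sumrB; apply: eq_bigr => v _.
  rewrite /bb wu; case: ifP => _; rewrite ?mul1r ?mul0r.
    transitivity ((ratr (w v) - ratr (w u)) * ((b v)%:R : R)); last by ring.
    by congr (_ * _); exact: ratrB'.
  transitivity (0 * ((b v)%:R : R)); last by ring.
  by congr (_ * _); exact: rmorph0.
have aR : (ratr a : R) = ratr (w u) by rewrite /a tp mul1r wu.
have Dv : \sum_(v < n) ratr (w v) * y v =
   (ratr a : R) * t%:~R + \sum_(v < n) (ratr (bb v) : R) * (b v)%:R.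
  rewrite Wsum aR /y.
  under eq_bigr => v _ do rewrite mulrDr [ratr (w v) * (_ * _)]mulrCA [ratr (w v) * ((if v == u then _ else _) * _)]mulrCA.
  rewrite big_split /= (sum_ind1 _ _ u (fun v => (ratr (w v) : R) * tau%:~R)) tauR.
  ring.
exists y; split => //.
- rewrite /fS (sum_inS _ _ _ _ yout) /y big_split /= BR (sum_ind1 _ _ u (fun _ => (tau%:~R : R))) tauR.
  lra.
- move=> v; rewrite /y; case: ifP => h.
    have -> : (v == u) = false by apply/negbTE; apply: contraNneq unt => <-.
    by rewrite mul1r mul0r addr0 lexx ler0n.
  rewrite mul0r add0r; case: eqP => [->|_]; last by rewrite mul0r lexx ler0n.
  rewrite mul1r ler0z pmulrn ler_int; apply/andP; split => //; lia.
- rewrite -Dv aR.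
  have Xge : 0 <= \sum_(v < n) (if v \in take j s then 1 else 0) * ((ratr (w v) : R) * (b v)%:R).
    apply: sumr_ge0 => v _; case: ifP => _; rewrite ?mul0r ?mul1r //.
    by apply: mulr_ge0 => //; rewrite ler0n.
  rewrite /y.
  under eq_bigr => v _ do rewrite mulrDr [ratr (w v) * (_ * _)]mulrCA [ratr (w v) * ((if v == u then _ else _) * _)]mulrCA.
  rewrite big_split /= (sum_ind1 _ _ u (fun v => (ratr (w v) : R) * tau%:~R)).
  have t1 : (1 : R) <= tau%:~R by rewrite -[1]/(1%:~R) ler_int.
  have t1' : (0 : R) <= tau%:~R - 1 by rewrite subr_ge0.
  have := mulr_ge0 (W0 u) t1'; rewrite mulrBr mulr1.
  lra.
Qed.

Lemma Lxi_le (R : realType) n N (C : rat) (d : 'I_N -> 'I_n -> rat) (w : 'I_n -> rat)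
  (b : 'I_n -> nat) (S : {set 'I_n}) (k' : nat) (xi : 'I_N) (y : 'I_n -> R) :
  (forall v, 0 <= w v) -> (kxi C d xi S - k'%:Z)%:~R <= fS y S ->
  (forall v, 0 <= y v <= (b v)%:R) ->
  Lstar_xi R C d w b S k' xi <= \sum_(v < n) ratr (w v) * y v.
Proof.
move=> w0 hy hb; apply: ge_inf; last by exists y; split.
exists 0 => r [z [_ hz ->]]; apply: sumr_ge0 => v _; apply: mulr_ge0.
  by rewrite ler0q.
by case/andP: (hz v).
Qed.

Lemma Lxi_ge0 (R : realType) n N (C : rat) (d : 'I_N -> 'I_n -> rat) (w : 'I_n -> rat)
  (b : 'I_n -> nat) (S : {set 'I_n}) (k' : nat) (xi : 'I_N) :
  (forall v, 0 <= w v) -> kxi C d xi S - k'%:Z <= (\sum_(v in S) b v)%:Z ->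
  0 <= Lstar_xi R C d w b S k' xi.
Proof.
move=> w0 hb; apply: lb_le_inf.
  exists (\sum_(v < n) ratr (w v) * ((b v)%:R : R)); exists (fun v => (b v)%:R); split => //.
    by rewrite /fS -natr_sum pmulrn ler_int.
  by move=> v; rewrite lexx ler0n.
move=> r [z [_ hz ->]]; apply: sumr_ge0 => v _; apply: mulr_ge0.
  by rewrite ler0q.
by case/andP: (hz v).
Qed.

Theorem theorem4 (R : realType) (n N : nat) (C : rat) (p : 'I_N -> rat)
  (d : 'I_N -> 'I_n -> rat) (X : Xkind)
  (w : 'I_n -> rat) (b : 'I_n -> nat) (S : {set 'I_n}) (k' : nat)
  (ord : 'I_N -> seq 'I_n) :
  0 < C ->
  (forall xi, 0 <= p xi) -> \sum_(xi < N) p xi = 1 ->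
  (forall xi v, 0 <= d xi v <= C) ->
  (if X is XCvrp k then (0 < k)%N else True) ->
  (forall v, 0 <= w v) ->
  (0 < #|S|)%N -> (0 < k')%N ->
  (forall xi, kxi C d xi S - k'%:Z <= (\sum_(v in S) b v)%:Z) ->
  (forall xi, perm_eq (ord xi) (enum S) /\ sorted (fun u v => w u <= w v) (ord xi)) ->
  let alphahat := fun xi (S' : {set 'I_n}) =>
    (if S' == S then 1 else 0) * ratr (p xi * alphabar C d w b S k' xi (ord xi)) : R in
  let betahat := fun xi v =>
    ratr (p xi * betabar C d w b S k' xi (ord xi) v) : R in
  [/\ inA w alphahat betahat,
      forall (xbar : Edge n -> R) (theta : 'I_n -> R),
        inX C p d X xbar -> xE xbar S <= #|S|%:R - k'%:R ->
        (exists y, inGamma C p d w b xbar alphahat betahat theta y) ->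
        fS theta S >= Lstar R C p d w b S k'
                        * (1 + xE xbar S - #|S|%:R + k'%:R)
    & (forall (x : Edge n -> R) (theta : 'I_n -> R),
         inP C p d w b X x theta -> xE x S <= #|S|%:R - k'%:R) ->
      forall (x : Edge n -> R) (theta : 'I_n -> R),
         inP C p d w b X x theta ->
         fS theta S >= Lstar R C p d w b S k'
                        * (1 + xE x S - #|S|%:R + k'%:R)].
Proof.
move=> C0 p0 p1 dC Xk w0 S0 k0 hb hord alphahat betahat.
pose t xi := kxi C d xi S - k'%:Z.
pose ab xi := alphabar C d w b S k' xi (ord xi).
pose bt xi v := betabar C d w b S k' xi (ord xi) v.
have aE : forall xi, ab xi =
   (if 0 < t xi then 1 else 0) * nth 0 (map w (ord xi)) (jidx b (ord xi) (t xi)).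
  by move=> xi; rewrite /ab /alphabar /t subr_gt0.
have GF : forall xi,
  0 <= ab xi /\ (forall v, bt xi v <= 0) /\
  (forall v, v \in S -> 0 <= w v - ab xi - bt xi v) /\
  (forall v, v \notin S -> bt xi v = 0) /\
  (t xi <= 0 -> ab xi = 0 /\ forall v, bt xi v = 0) /\
  (0 < t xi -> exists y : 'I_n -> R,
        [/\ (t xi)%:~R <= fS y S, forall v, 0 <= y v <= (b v)%:R,
            \sum_(v < n) ratr (w v) * y v =
              (ratr (ab xi) : R) * (t xi)%:~R + \sum_(v < n) (ratr (bt xi v) : R) * (b v)%:R
          & (ratr (ab xi) : R) <= ratr (ab xi) * (t xi)%:~R + \sum_(v < n) (ratr (bt xi v) : R) * (b v)%:R]).
  move=> xi; rewrite aE.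
  exact (@greedy R n w b S (ord xi) (t xi) w0 (proj1 (hord xi)) (proj2 (hord xi)) S0 (hb xi)).
have P0 : forall xi, (0 : R) <= ratr (p xi) by move=> xi; rewrite ler0q.
have alE : forall xi S', alphahat xi S' =
    (if S' == S then 1 else 0) * (ratr (p xi) * ratr (ab xi)).
  by move=> xi S'; rewrite /alphahat; congr (_ * _); exact: rmorphM.
have beE : forall xi v, betahat xi v = ratr (p xi) * ratr (bt xi v).
  by move=> xi v; rewrite /betahat; exact: rmorphM.
have Aat : forall xi v, alphaAt alphahat xi v =
    if v \in S then ratr (p xi) * ratr (ab xi) else 0.
  move=> xi v; rewrite /alphaAt; under eq_bigr do rewrite alE.
  by rewrite (sum_ind R _ (fun S' : {set 'I_n} => (0 < #|S'|)%N && (v \in S')) S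
     (fun _ => ratr (p xi) * ratr (ab xi))) S0.
have AxE : forall xi (F : {set 'I_n} -> R),
    \sum_(S' : {set 'I_n} | (0 < #|S'|)%N) alphahat xi S' * F S' =
    ratr (p xi) * ratr (ab xi) * F S.
  move=> xi F; under eq_bigr => S' _ do rewrite alE -mulrA.
  by rewrite (sum_ind R _ (fun S' : {set 'I_n} => (0 < #|S'|)%N) S
     (fun S' => ratr (p xi) * ratr (ab xi) * F S')) S0.
pose Rg (xbar : Edge n -> R) xi := ratr (p xi) * ratr (ab xi) * xE xbar S
   + ratr (p xi) * ratr (ab xi) * ((kxi C d xi S)%:~R - #|S|%:R)
   + \sum_(v < n) ratr (p xi) * ratr (bt xi v) * ((b v)%:R : R).
have RHSE : forall xbar : Edge n -> R,
    \sum_(xi < N) \sum_(S' : {set 'I_n} | (0 < #|S'|)%N) alphahat xi S' * xE xbar S'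
    + nu C d b alphahat betahat = \sum_(xi < N) Rg xbar xi.
  move=> xbar; rewrite /nu addrA -!big_split /=; apply: eq_bigr => xi _.
  rewrite (AxE xi (fun S' => xE xbar S')) (AxE xi (fun S' => (kxi C d xi S')%:~R - #|S'|%:R)).
  by congr (_ + _); apply: eq_bigr => v _; rewrite beE.
have LHSE : forall y : 'I_N -> 'I_n -> R,
    \sum_(xi < N) \sum_(v < n) (betahat xi v + alphaAt alphahat xi v) * y xi v =
    \sum_(xi < N) \sum_(v < n) (ratr (p xi) * ratr (bt xi v) +
        (if v \in S then ratr (p xi) * ratr (ab xi) else 0)) * y xi v.
  by move=> y; apply: eq_bigr => xi _; apply: eq_bigr => v _; rewrite beE Aat.
have W0 : forall v, (0 : R) <= ratr (w v) by move=> v; rewrite ler0q.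
have P2 : forall (xbar : Edge n -> R) (theta : 'I_n -> R),
   xE xbar S <= #|S|%:R - k'%:R ->
   (exists y, inGamma C p d w b xbar alphahat betahat theta y) ->
   Lstar R C p d w b S k' * (1 + xE xbar S - #|S|%:R + k'%:R) <= fS theta S.
  move=> xbar theta hx [y [th0 hy hG hth]].
  rewrite RHSE LHSE in hG.
  pose δ := xE xbar S - #|S|%:R + k'%:R.
  have e1 : 1 + xE xbar S - #|S|%:R + k'%:R = 1 + δ by rewrite /δ; ring.
  rewrite e1.
  have Lxi0 : forall xi, 0 <= Lstar_xi R C d w b S k' xi.
    by move=> xi; apply: Lxi_ge0 => //; exact: hb.
  case: (leP 0 (1 + δ)) => hd; last first.
    apply: (@le_trans _ _ 0).
      apply: mulr_ge0_le0; last exact: ltW.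
      by apply: sumr_ge0 => xi _; apply: mulr_ge0.
    by apply: sumr_ge0 => v _.
  have d0 : δ <= 0 by rewrite /δ; lra.
  have Hxi : forall xi, Lstar_xi R C d w b S k' xi * (1 + δ) <=
      (ratr (ab xi) : R) * (t xi)%:~R + \sum_(v < n) (ratr (bt xi v) : R) * (b v)%:R
      + ratr (ab xi) * δ.
    move=> xi; have [a0 [bb0 [F3 [bbout [tneg tpos]]]]] := GF xi.
    case: (ltP 0 (t xi)) => tp.
      have [yg [yf yb yv ad]] := tpos tp.
      have Lle := @Lxi_le R n N C d w b S k' xi yg w0 yf yb; rewrite yv in Lle.
      move: Lle ad.
      set D := (ratr (ab xi) : R) * (t xi)%:~R + _.
      set L := Lstar_xi R C d w b S k' xi.
      move=> Lle ad.
      have h1 : 0 <= (D - L) * (1 + δ) by apply: mulr_ge0 => //; rewrite subr_ge0.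
      have h2 : 0 <= (D - ratr (ab xi)) * (- δ).
        by apply: mulr_ge0; rewrite ?subr_ge0 // oppr_ge0.
      nra.
    have [a0' bb0'] := tneg tp.
    have Lle : Lstar_xi R C d w b S k' xi <= 0.
      have h1 : (t xi)%:~R <= fS (fun _ => (0:R)) S by rewrite /fS big1 // lerz0.
      have h2 : forall v : 'I_n, 0 <= (fun _ => (0:R)) v <= (b v)%:R by move=> v; apply/andP; split => //; exact: ler0n.
      apply: (le_trans (@Lxi_le R n N C d w b S k' xi (fun _ => 0) w0 h1 h2)).
      by rewrite big1 // => v _; rewrite mulr0.
    rewrite a0' rmorph0 !mul0r add0r addr0 big1; last first.
      by move=> v _; rewrite bb0' rmorph0 mul0r.
    exact: mulr_le0_ge0.
  apply: (@le_trans _ _ (\sum_(xi < N) \sum_(v in S) ratr (p xi) * ratr (w v) * y xi v)); last first.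
    rewrite /fS exchange_big /=; apply: ler_sum => v _; exact: hth.
  have key : forall xi,
      ratr (p xi) * Lstar_xi R C d w b S k' xi * (1 + δ) +
      (\sum_(v < n) (ratr (p xi) * ratr (bt xi v) +
        (if v \in S then ratr (p xi) * ratr (ab xi) else 0)) * y xi v - Rg xbar xi)
      <= \sum_(v in S) ratr (p xi) * ratr (w v) * y xi v.
    move=> xi; have [a0 [bb0 [F3 [bbout [tneg tpos]]]]] := GF xi.
    have Lg : \sum_(v < n) (ratr (p xi) * ratr (bt xi v) +
        (if v \in S then ratr (p xi) * ratr (ab xi) else 0)) * y xi v =
        \sum_(v in S) (ratr (p xi) * ratr (bt xi v) + ratr (p xi) * ratr (ab xi)) * y xi v.
      rewrite -(sum_inS _ _ S (fun v => (ratr (p xi) * ratr (bt xi v) +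
        (if v \in S then ratr (p xi) * ratr (ab xi) else 0)) * y xi v)).
        by apply: eq_bigr => v vS; rewrite vS.
      by move=> v vS; rewrite (negbTE vS) bbout // rmorph0 mulr0 addr0 mul0r.
    have S12 : 0 <= \sum_(v in S) ratr (p xi) * ratr (w v) * y xi v -
        \sum_(v in S) (ratr (p xi) * ratr (bt xi v) + ratr (p xi) * ratr (ab xi)) * y xi v.
      rewrite -sumrB; apply: sumr_ge0 => v vS.
      have hv : (0 : R) <= ratr (w v) - ratr (ab xi) - ratr (bt xi v).
        have : (0 : R) <= ratr (w v - ab xi - bt xi v) by rewrite ler0q; exact: F3.
        by rewrite !ratrB'.
      have := mulr_ge0 (P0 xi) (mulr_ge0 hv (proj1 (andP (hy xi v)))).
      have -> : ratr (p xi) * ratr (w v) * y xi v - (ratr (p xi) * ratr (bt xi v) + ratr (p xi) * ratr (ab xi)) * y xi v = ratr (p xi) * ((ratr (w v) - ratr (ab xi) - ratr (bt xi v)) * y xi v) by ring.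
      by [].
    have hP : 0 <= ratr (p xi) * ((ratr (ab xi) : R) * (t xi)%:~R + \sum_(v < n) (ratr (bt xi v) : R) * (b v)%:R
      + ratr (ab xi) * δ - Lstar_xi R C d w b S k' xi * (1 + δ)).
      by apply: mulr_ge0 => //; rewrite subr_ge0; exact: Hxi.
    have tR : ((t xi)%:~R : R) = (kxi C d xi S)%:~R - k'%:R by rewrite /t intrB -pmulrn.
    have sb : \sum_(v < n) ratr (p xi) * ratr (bt xi v) * ((b v)%:R : R) =
        ratr (p xi) * \sum_(v < n) ratr (bt xi v) * (b v)%:R.
      by rewrite mulr_sumr; apply: eq_bigr => v _; rewrite mulrA.
    rewrite tR in hP; rewrite Lg /Rg sb; rewrite /δ in hP *.
    lra.
  apply: le_trans (ler_sum _ (fun xi (_ : true) => key xi)).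
  rewrite big_split /= sumrB /Lstar mulr_suml.
  lra.
split.
- split.
  + move=> xi S' _; rewrite alE; case: eqP => _; rewrite ?mul1r ?mul0r //.
    by apply: mulr_ge0 => //; rewrite ler0q; exact: (proj1 (GF xi)).
  + move=> xi v; rewrite beE; apply: mulr_ge0_le0 => //; rewrite lerq0.
    exact: (proj1 (proj2 (GF xi))).
  + move=> xi v wv0; rewrite Aat beE.
    have [a0 [bb0 [F3 [bbout _]]]] := GF xi.
    case: ifP => vS; last by rewrite bbout ?vS // rmorph0 mulr0 addr0.
    rewrite -mulrDr; apply: mulr_ge0_le0 => //.
    have : (ratr (bt xi v + ab xi) : R) <= 0.
      by rewrite lerq0; have := F3 v vS; rewrite wv0; lra.
    by rewrite ratrD'.
- move=> xbar theta _; exact: P2.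
- move=> H x theta hP; have hx := H x theta hP.
  case: hP => hX [y [th0 hy hs hth]].
  apply: P2 => //; exists y; split => //.
  rewrite RHSE LHSE; apply: ler_sum => xi _.
  have [a0 [bb0 [F3 [bbout _]]]] := GF xi.
  have hsx := hs xi S S0.
  have e2 : \sum_(v < n) (ratr (p xi) * ratr (bt xi v) +
        (if v \in S then ratr (p xi) * ratr (ab xi) else 0)) * y xi v =
      \sum_(v < n) ratr (p xi) * ratr (bt xi v) * y xi v +
       ratr (p xi) * ratr (ab xi) * fS (y xi) S.
    rewrite /fS mulr_sumr -(sum_inS _ _ S (fun v => ratr (p xi) * ratr (bt xi v) * y xi v)); last first.
      by move=> v vS; rewrite bbout // rmorph0 mulr0 mul0r.
    rewrite -big_split /= -(sum_inS _ _ S (fun v => (ratr (p xi) * ratr (bt xi v) +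
        (if v \in S then ratr (p xi) * ratr (ab xi) else 0)) * y xi v)); last first.
      by move=> v vS; rewrite (negbTE vS) bbout // rmorph0 mulr0 addr0 mul0r.
    by apply: eq_bigr => v vS; rewrite vS mulrDl mulrA.
  have h1 : \sum_(v < n) ratr (p xi) * ratr (bt xi v) * ((b v)%:R : R) <=
      \sum_(v < n) ratr (p xi) * ratr (bt xi v) * y xi v.
    apply: ler_sum => v _; apply: ler_wnM2l; last by case/andP: (hy xi v).
    by apply: mulr_ge0_le0 => //; rewrite lerq0.
  have h2 : ratr (p xi) * ratr (ab xi) * ((kxi C d xi S)%:~R + xE x S - #|S|%:R) <=
      ratr (p xi) * ratr (ab xi) * fS (y xi) S.
    by apply: ler_wpM2l => //; apply: mulr_ge0 => //; rewrite ler0q.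
  rewrite e2 /Rg; lra.
Qed.
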